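(* Let $H(t)$ be a continuous family of Hermitian operators on a finite-dimensional Hilbert space, $A(t):=-iH(t)$, and for $t\in\mathbb{R}$ let $$\Omega_2(t):=\int_0^tA(s)\,ds-\frac12\int_0^t\Big[\int_0^sA(\sigma)\,d\sigma,\;A(s)\Big]ds,\qquad\dot\Omega_2(t)=A(t)-\frac12\Big[\int_0^tA(\sigma)\,d\sigma,\;A(t)\Big].$$ Let $g$ be the entire function determined by $\frac{e^z-1}{z}=1+\frac12z+\frac16z^2+g(z)z^3$. Then there is an absolute constant $C$ such that $$\big\|g(\operatorname{ad}_{\Omega_2})\big(\operatorname{ad}_{\Omega_2}^3(\dot\Omega_2)\big)\big\|\le C\big\|\operatorname{ad}_{\Omega_2}^3(\dot\Omega_2)\big\|.$$
   Context: $\operatorname{ad}_\Omega(X)=[\Omega,X]$ and $\operatorname{ad}_\Omega^{k+1}(X)=[\Omega,\operatorname{ad}^k_\Omega(X)]$; $g(\operatorname{ad}_{\Omega_2})$ is defined via the power series of $g$. $\|\cdot\|$ is the spectral norm. *)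

(* Defs.v *)
From HB Require Import structures.
From mathcomp Require Import all_boot all_order all_algebra.
From mathcomp Require Import all_classical all_reals all_analysis.
From mathcomp Require Import complex.
Set Implicit Arguments. Unset Strict Implicit. Unset Printing Implicit Defensive.
Import Order.TTheory GRing.Theory Num.Theory.
Import numFieldNormedType.Exports.
Local Open Scope classical_set_scope.
Local Open Scope ring_scope.
Local Open Scope complex_scope.

Section Defs.
Variable R : realType.
Local Notation C := (complex R).
Variable n : nat.

Definition vnorm (v : 'cV[C]_n) : R :=
  Num.sqrt (\sum_(i < n) (complex.Re (v i 0) ^+ 2 + complex.Im (v i 0) ^+ 2)).

Definition specnorm (M : 'M[C]_n) : R :=
  sup [set vnorm (M *m v) | v in [set v : 'cV[C]_n | vnorm v <= 1]].

Definition oint (a b : R) (f : R -> R) : R :=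
  if a <= b then Rintegral lebesgue_measure `[a, b] f
  else - Rintegral lebesgue_measure `[b, a] f.

Definition mxint (a b : R) (F : R -> 'M[C]_n) : 'M[C]_n :=
  \matrix_(i, j) (oint a b (fun s => complex.Re (F s i j)) +i* oint a b (fun s => complex.Im (F s i j))).

Definition comm (X Y : 'M[C]_n) : 'M[C]_n := X *m Y - Y *m X.

Definition adk (Om : 'M[C]_n) (k : nat) (X : 'M[C]_n) : 'M[C]_n :=
  iter k (comm Om) X.

Definition is_hermitian (M : 'M[C]_n) : Prop := forall i j, M j i = (M i j)^*.

Definition mx_continuous (F : R -> 'M[C]_n) : Prop :=
  forall i j, continuous (fun t => complex.Re (F t i j)) /\ continuous (fun t => complex.Im (F t i j)).

(* g(z) = sum_{k>=0} z^k/(k+4)!, the entire function with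
   (e^z-1)/z = 1 + z/2 + z^2/6 + g(z) z^3.
   g(ad_Om)(Y) := sum_k ad_Om^k(Y)/(k+4)!, the series summed entrywise. *)
Definition g_ad (Om Y : 'M[C]_n) : 'M[C]_n :=
  \matrix_(i, j)
    ((limn (fun N => \sum_(0 <= k < N) (complex.Re (adk Om k Y i j) / ((k + 4)`!)%:R)))
     +i* (limn (fun N => \sum_(0 <= k < N) (complex.Im (adk Om k Y i j) / ((k + 4)`!)%:R)))).

Variable H : R -> 'M[C]_n.

Definition A (t : R) : 'M[C]_n := - ('i *: H t).

Definition Omega2 (t : R) : 'M[C]_n :=
  mxint 0 t A - 2%:R^-1 *: mxint 0 t (fun s => comm (mxint 0 s A) (A s)).

Definition dOmega2 (t : R) : 'M[C]_n :=
  A t - 2%:R^-1 *: comm (mxint 0 t A) (A t).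

End Defs.

(* Main.v *)
Require Import Defs.
From HB Require Import structures.
From mathcomp Require Import all_boot all_order all_algebra.
From mathcomp Require Import all_classical all_reals all_analysis.
From mathcomp Require Import complex ring lra.
Set Implicit Arguments. Unset Strict Implicit. Unset Printing Implicit Defensive.
Import Order.TTheory GRing.Theory Num.Theory.
Import numFieldNormedType.Exports.
Local Open Scope classical_set_scope.
Local Open Scope ring_scope.

Section Scalar.
Variable R : realType.
Local Notation mu := (@lebesgue_measure R).

Definition I01 (f : R -> R) : R := \int[mu]_(x in `[0%R, 1%R]) f x.

Lemma I01_int (f : R -> R) : continuous f -> mu.-integrable `[0%R, 1%R] (EFin \o f).
Proof.
move=> cf; apply: continuous_compact_integrable; first exact: segment_compact.
by apply: continuous_in_subspaceT => x _; exact: cf.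
Qed.

Lemma cM (f g : R -> R) : continuous f -> continuous g ->
  continuous (fun x => f x * g x).
Proof. by move=> cf cg x; exact: (continuousM (cf x) (cg x)). Qed.

Lemma cD (f g : R -> R) : continuous f -> continuous g ->
  continuous (fun x => f x + g x).
Proof. by move=> cf cg x; exact: (continuousD (cf x) (cg x)). Qed.

Lemma cB (f g : R -> R) : continuous f -> continuous g ->
  continuous (fun x => f x - g x).
Proof. by move=> cf cg x; exact: (continuousB (cf x) (cg x)). Qed.

Lemma cC (a : R) : continuous (fun _ : R => a).
Proof. by move=> x; apply: cst_continuous. Qed.

Lemma cI : continuous (fun x : R => x).
Proof. by move=> x; apply: cvg_id. Qed.

Lemma cX (f : R -> R) k : continuous f -> continuous (fun x => f x ^+ k).
Proof.
move=> cf; elim: k => [|k IH]; first by under eq_fun do rewrite expr0; exact: cC.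
by under eq_fun do rewrite exprS; exact: cM.
Qed.

Lemma cN (f : R -> R) : continuous f -> continuous (fun x => - f x).
Proof. by move=> cf x; exact: (continuousN (cf x)). Qed.

Lemma cS (I : Type) (r : seq I) (F : I -> R -> R) :
  (forall i, continuous (F i)) -> continuous (fun x => \sum_(i <- r) F i x).
Proof.
move=> cF; elim: r => [|i r IH].
  by under eq_fun do rewrite big_nil; exact: cC.
by under eq_fun do rewrite big_cons; exact: cD.
Qed.

Lemma cComp (h : R -> R) (m : R) : continuous h -> continuous (fun s : R => h (s * m)).
Proof.
move=> ch x.
have c1 : continuous (fun s : R => s * m) by apply: cM; [exact: cI|exact: cC].
exact: (continuous_comp (c1 x) (ch _)).
Qed.

Lemma cAbs (f : R -> R) : continuous f -> continuous (fun x => `|f x|).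
Proof.
move=> cf x; exact: (continuous_comp (cf x) (@norm_continuous _ R^o _)).
Qed.

Lemma I01D (f g : R -> R) : continuous f -> continuous g ->
  I01 (fun x => f x + g x) = I01 f + I01 g.
Proof. by move=> cf cg; rewrite /I01 RintegralD //; exact: I01_int. Qed.

Lemma I01B (f g : R -> R) : continuous f -> continuous g ->
  I01 (fun x => f x - g x) = I01 f - I01 g.
Proof. by move=> cf cg; rewrite /I01 RintegralB //; exact: I01_int. Qed.

Lemma I01Z (r : R) (f : R -> R) : continuous f ->
  I01 (fun x => r * f x) = r * I01 f.
Proof. by move=> cf; rewrite /I01 RintegralZl //; exact: I01_int. Qed.

Lemma I01_le (f g : R -> R) : continuous f -> continuous g ->
  (forall x, 0 <= x <= 1 -> f x <= g x) -> I01 f <= I01 g.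
Proof.
move=> cf cg fg; rewrite /I01; apply: le_Rintegral.
- by [].
- exact: I01_int.
- exact: I01_int.
move=> x /=; rewrite in_itv /=; exact: fg.
Qed.

Lemma I01_norm (f : R -> R) : continuous f -> `|I01 f| <= I01 (fun x => `|f x|).
Proof. move=> cf; rewrite /I01; apply: le_normr_Rintegral; [by []| exact: I01_int]. Qed.

Lemma I01_ext (f g : R -> R) : (forall x, 0 <= x <= 1 -> f x = g x) -> I01 f = I01 g.
Proof.
move=> fg; rewrite /I01; apply: eq_Rintegral => x; rewrite inE /= in_itv /=.
exact: fg.
Qed.

Lemma I01_sum (I : Type) (r : seq I) (F : I -> R -> R) :
  (forall i, continuous (F i)) ->
  I01 (fun x => \sum_(i <- r) F i x) = \sum_(i <- r) I01 (F i).
Proof.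
move=> cF; elim: r => [|i r IH].
  under eq_fun do rewrite big_nil.
  by rewrite big_nil /I01 Rintegral_cst //= mul0r.
under eq_fun do rewrite big_cons.
have cs := @cS _ r _ cF.
by rewrite big_cons I01D ?IH.
Qed.

Lemma I01_moment k :
  I01 (fun s => s ^+ k * (1 - s) ^+ 3) = (k`! * 6)%:R / (k + 4)`!%:R.
Proof.
have := @beta_fun_fact R k 3.
rewrite /beta_fun /= => E.
rewrite /I01 Rintegral_mkcond.
have -> : (k + 4 = (k + 3).+1)%N by rewrite addnS.
exact: E.
Qed.

Lemma I01_onem3 : I01 (fun s => (1 - s) ^+ 3) = 4%:R^-1.
Proof. by rewrite /I01 -(Rintegral_onemXn 3). Qed.

End Scalar.

Section Conv.
Variable R : realType.

Lemma tail_bound (c : nat -> R) (h θ B : R) :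
  (forall k, `|c k| <= 1) -> `|θ| <= B ->
  series (fun k => c k * θ ^+ k / k`!%:R) @ \oo --> h ->
  forall N, `|h - series (fun k => c k * θ ^+ k / k`!%:R) N| <=
     limn (series (exp_coeff B)) - series (exp_coeff B) N.
Proof.
move=> c1 thB cvgu N.
set u := (fun k => c k * θ ^+ k / k`!%:R).
apply: (@ler_cvg_to _ \oo _ _ (fun M => `|series u M - series u N|)
   (fun M => series (exp_coeff B) M - series (exp_coeff B) N)).
- apply: cvg_norm; apply: cvgB => //; exact: cvg_cst.
- apply: cvgB; last exact: cvg_cst.
  exact: is_cvg_series_exp_coeff.
near=> M.
have NM : (N <= M)%N by near: M; exists N.
have split_s : forall v : R ^nat, series v M - series v N = \sum_(N <= k < M) v k.
  move=> v; rewrite /series /= (@big_cat_nat _ _ _ N 0 M _ _ (leq0n N) NM) /=.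
  by rewrite [X in X - _]addrC addrK.
rewrite !split_s.
apply: (le_trans (ler_norm_sum _ _ _)).
apply: ler_sum => k _.
rewrite /u /exp_coeff /= normrM normfV normr_nat.
apply: ler_wpM2r; first by rewrite invr_ge0.
rewrite normrM normrX -[B ^+ k]mul1r.
apply: ler_pM => //.
apply: lerXn2r => //; rewrite qualifE /= ?(le_trans _ thB) //.
Unshelve. all: by end_near.
Qed.


Lemma series_to_int (c : nat -> R) (h : R -> R) (m : R) :
  (forall k, `|c k| <= 1) -> continuous h ->
  (forall θ, series (fun k => c k * θ ^+ k / k`!%:R) @ \oo --> h θ) ->
  (fun N => \sum_(0 <= k < N) c k * m ^+ k / (k + 4)`!%:R) @ \oo -->
    I01 (fun s => (1 - s) ^+ 3 * h (s * m)) / 6%:R.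
Proof.
move=> c1 ch cvgh.
set B := `|m|.
set L := limn (series (exp_coeff B)).
pose T N := L - series (exp_coeff B) N.
have T0 : (fun N => 24%:R^-1 * T N) @ \oo --> 0.
  rewrite -(mulr0 (24%:R^-1)); apply: cvgMl_tmp.
  rewrite -(subrr L); apply: cvgB; [exact: cvg_cst | exact: is_cvg_series_exp_coeff].
pose p N s := series (fun k => c k * (s * m) ^+ k / k`!%:R) N.
have c3 : continuous (fun s : R => (1 - s) ^+ 3).
  by apply: cX; apply: cB; [exact: cC|exact: cI].
have cp : forall N, continuous (p N).
  move=> N; rewrite /p /series /=; apply: cS => k.
  apply: cM; last exact: cC.
  apply: cM; first exact: cC.
  by apply: cX; apply: cM; [exact: cI|exact: cC].
have ch' : continuous (fun s : R => (1 - s) ^+ 3 * h (s * m)).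
  by apply: cM => //; exact: cComp.
have SN : forall N, \sum_(0 <= k < N) c k * m ^+ k / (k + 4)`!%:R =
    I01 (fun s => (1 - s) ^+ 3 * p N s) / 6%:R.
  move=> N.
  have -> : (fun s => (1 - s) ^+ 3 * p N s) = (fun s =>
      \sum_(0 <= k < N) (c k * m ^+ k / k`!%:R) * (s ^+ k * (1 - s) ^+ 3)).
    apply/funext => s; rewrite /p /series /= mulr_sumr; apply: eq_bigr => k _.
    by rewrite exprMn; ring.
  rewrite I01_sum; last first.
    move=> k; apply: cM; first exact: cC.
    by apply: cM => //; apply: cX; exact: cI.
  rewrite mulr_suml; apply: eq_bigr => k _.
  rewrite I01Z; last by apply: cM => //; apply: cX; exact: cI.
  rewrite I01_moment natrM.
  have k0 : (k`!%:R : R) != 0 by rewrite pnatr_eq0 -lt0n fact_gt0.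
  have k4 : ((k + 4)`!%:R : R) != 0 by rewrite pnatr_eq0 -lt0n fact_gt0.
  by field; rewrite k0 k4.
apply/subr_cvg0.
apply: (@squeeze_cvgr _ _ _ _ (fun N => - (24%:R^-1 * T N)) (fun N => 24%:R^-1 * T N)); last first.
- exact: T0.
- by rewrite -oppr0; apply: cvgN.
near=> N.
rewrite -ler_norml SN -mulrBl -I01B //; last by apply: cM.
rewrite normrM (@ger0_norm _ (6%:R^-1)); last by rewrite invr_ge0.
apply: (le_trans (ler_wpM2r _ (I01_norm _))); first by rewrite invr_ge0.
  by apply: cB => //; apply: cM.
apply: (le_trans (ler_wpM2r _ (@I01_le _ _ (fun s => T N * (1 - s) ^+ 3) _ _ _))).
- by rewrite invr_ge0.
- by apply: cAbs; apply: cB => //; apply: cM.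
- by apply: cM => //; exact: cC.
- move=> s /andP[s0 s1].
  rewrite -mulrBr normrM (ger0_norm (exprn_ge0 _ _)); last by rewrite subr_ge0.
  rewrite mulrC; apply: ler_wpM2r; first by rewrite exprn_ge0 // subr_ge0.
  rewrite distrC; apply: (tail_bound c1) => //.
  by rewrite normrM /B ger0_norm // ler_piMl.
rewrite I01Z // I01_onem3.
rewrite -mulrA mulrC le_eqVlt; apply/orP; left; apply/eqP; field.
Unshelve. all: by end_near.
Qed.

End Conv.

Local Open Scope complex_scope.

Section Trig.
Variable R : realType.
Local Notation C := (complex R).

Definition cc (k : nat) : R := (~~ odd k)%:R * (-1) ^+ k./2.
Definition sc (k : nat) : R := (odd k)%:R * (-1) ^+ k.-1./2.

Lemma cc_le1 k : `|cc k| <= 1.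
Proof. rewrite /cc normrM normr_sign mulr1; by case: odd; rewrite ?normr0 ?normr1. Qed.

Lemma sc_le1 k : `|sc k| <= 1.
Proof. rewrite /sc normrM normr_sign mulr1; by case: odd; rewrite ?normr0 ?normr1. Qed.

Lemma cos_series (t : R) :
  series (fun k => cc k * t ^+ k / k`!%:R) @ \oo --> cos t.
Proof.
have -> : (fun k => cc k * t ^+ k / k`!%:R) = cos_coeff t.
  by apply/funext => k.
rewrite unlock; exact: is_cvg_series_cos_coeff.
Qed.

Lemma sin_series (t : R) :
  series (fun k => sc k * t ^+ k / k`!%:R) @ \oo --> sin t.
Proof.
have -> : (fun k => sc k * t ^+ k / k`!%:R) = sin_coeff t.
  by apply/funext => k.
rewrite unlock; exact: is_cvg_series_sin_coeff.
Qed.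

Definition GR (m : R) : R := I01 (fun s => (1 - s) ^+ 3 * cos (s * m)) / 6%:R.
Definition GI (m : R) : R := I01 (fun s => (1 - s) ^+ 3 * sin (s * m)) / 6%:R.

Lemma cvg_GR m : (fun N => \sum_(0 <= k < N) cc k * m ^+ k / (k + 4)`!%:R) @ \oo --> GR m.
Proof. apply: series_to_int; [exact: cc_le1|exact: continuous_cos|exact: cos_series]. Qed.

Lemma cvg_GI m : (fun N => \sum_(0 <= k < N) sc k * m ^+ k / (k + 4)`!%:R) @ \oo --> GI m.
Proof. apply: series_to_int; [exact: sc_le1|exact: continuous_sin|exact: sin_series]. Qed.

Lemma iexp2 k : ('i%C : C) ^+ k.+2 = - ('i%C ^+ k).
Proof. by rewrite !exprS mulrA -expr2 sqr_i mulN1r. Qed.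

Lemma iexp k : ('i%C : C) ^+ k = (cc k +i* sc k)%C.
Proof.
suff H : forall k, ('i%C : C) ^+ k = (cc k +i* sc k)%C /\
                   ('i%C : C) ^+ k.+1 = (cc k.+1 +i* sc k.+1)%C by case: (H k).
elim=> [|j [IH1 IH2]].
  split; first by rewrite expr0 /cc /sc /=; apply/eqP; rewrite eq_complex /= !expr0 mul0r mulr1 !eqxx.
  by rewrite expr1 /cc /sc /=; apply/eqP; rewrite eq_complex /= !expr0 mul0r mulr1 !eqxx.
split => //.
rewrite iexp2 IH1 /cc /sc /=.
rewrite negbK.
case: j IH1 IH2 => [|j] _ _ /=.
  by apply/eqP; rewrite eq_complex /= !expr0 !expr1 !mul0r !mul1r oppr0 !eqxx.
rewrite negbK !exprS.
apply/eqP; rewrite eq_complex /=; apply/andP; split; apply/eqP; ring.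
Qed.


Lemma imk (m : R) k : (('i%C * m%:C) ^+ k : C) = ((cc k * m ^+ k) +i* (sc k * m ^+ k))%C.
Proof.
rewrite exprMn iexp -rmorphXn /=.
by apply/eqP; rewrite eq_complex /=; apply/andP; split; apply/eqP; ring.
Qed.

Definition Gc (m : R) : C := (GR m +i* GI m)%C.

Lemma cvg_ReG (q : C) (m : R) :
  (fun N => \sum_(0 <= k < N) complex.Re (q * ('i%C * m%:C) ^+ k) / (k + 4)`!%:R) @ \oo
    --> complex.Re (q * Gc m).
Proof.
case: q => qa qb.
have -> : (fun N => \sum_(0 <= k < N) complex.Re ((qa +i* qb)%C * ('i%C * m%:C) ^+ k) / (k + 4)`!%:R)
  = (fun N => qa * \sum_(0 <= k < N) cc k * m ^+ k / (k + 4)`!%:R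
            - qb * \sum_(0 <= k < N) sc k * m ^+ k / (k + 4)`!%:R).
  apply/funext => N; rewrite !mulr_sumr -sumrB; apply: eq_bigr => k _.
  rewrite imk /=; ring.
rewrite /Gc /=.
apply: cvgB; apply: cvgMl_tmp; [exact: cvg_GR|exact: cvg_GI].
Qed.

Lemma cvg_ImG (q : C) (m : R) :
  (fun N => \sum_(0 <= k < N) complex.Im (q * ('i%C * m%:C) ^+ k) / (k + 4)`!%:R) @ \oo
    --> complex.Im (q * Gc m).
Proof.
case: q => qa qb.
have -> : (fun N => \sum_(0 <= k < N) complex.Im ((qa +i* qb)%C * ('i%C * m%:C) ^+ k) / (k + 4)`!%:R)
  = (fun N => qa * \sum_(0 <= k < N) sc k * m ^+ k / (k + 4)`!%:R
            + qb * \sum_(0 <= k < N) cc k * m ^+ k / (k + 4)`!%:R).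
  apply/funext => N; rewrite !mulr_sumr -big_split; apply: eq_bigr => k _.
  rewrite imk /=; ring.
rewrite /Gc /=.
apply: cvgD; apply: cvgMl_tmp; [exact: cvg_GI|exact: cvg_GR].
Qed.

End Trig.

Local Open Scope complex_scope.

Section RealCS.
Variable R : realType.

Lemma realCS (I : finType) (p q c d : I -> R) :
  \sum_i (p i * c i + q i * d i) <=
  Num.sqrt (\sum_i (p i ^+ 2 + q i ^+ 2)) * Num.sqrt (\sum_i (c i ^+ 2 + d i ^+ 2)).
Proof.
set X := \sum_i (p i ^+ 2 + q i ^+ 2).
set Y := \sum_i (c i ^+ 2 + d i ^+ 2).
set S := \sum_i (p i * c i + q i * d i).
have X0 : 0 <= X by apply: sumr_ge0 => i _; rewrite addr_ge0 // sqr_ge0.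
have Y0 : 0 <= Y by apply: sumr_ge0 => i _; rewrite addr_ge0 // sqr_ge0.
have [S0|S0] := lerP S 0.
  by apply: (le_trans S0); rewrite mulr_ge0 // sqrtr_ge0.
rewrite -sqrtrM // -(ger0_norm (ltW S0)) -sqrtr_sqr; apply: ler_wsqrtr.
have E : \sum_i ((Y * p i - S * c i) ^+ 2 + (Y * q i - S * d i) ^+ 2) =
         Y * (X * Y - S ^+ 2).
  transitivity (\sum_i (Y ^+ 2 * (p i ^+ 2 + q i ^+ 2) - (2%:R * Y * S) * (p i * c i + q i * d i)
                   + S ^+ 2 * (c i ^+ 2 + d i ^+ 2))).
    by apply: eq_bigr => i _; ring.
  rewrite big_split sumrB /= -!mulr_sumr -/X -/Y -/S; ring.
have [Yz|Yp] := eqVneq Y 0.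
  exfalso; move: S0; rewrite /S.
  have F0 : forall i, c i ^+ 2 + d i ^+ 2 = 0.
    move=> i; apply: (@psumr_eq0P R I predT (fun i => c i ^+ 2 + d i ^+ 2)) => //.
    by move=> j _; rewrite addr_ge0 // sqr_ge0.
  rewrite big1 ?ltxx // => i _.
  have /eqP := F0 i; rewrite paddr_eq0 ?sqr_ge0 // !sqrf_eq0 => /andP [/eqP -> /eqP ->].
  by rewrite !mulr0 addr0.
have Ypos : 0 < Y by rewrite lt_def Yp Y0.
rewrite -subr_ge0 -(pmulr_rge0 _ Ypos) -E.
by apply: sumr_ge0 => i _; rewrite addr_ge0 // sqr_ge0.
Qed.

End RealCS.

Section Vec.
Variable R : realType.
Local Notation C := (complex R).

Lemma ReD (x y : C) : complex.Re (x + y) = complex.Re x + complex.Re y.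
Proof. by case: x; case: y. Qed.
Lemma ImD (x y : C) : complex.Im (x + y) = complex.Im x + complex.Im y.
Proof. by case: x; case: y. Qed.
Lemma ReN (x : C) : complex.Re (- x) = - complex.Re x.
Proof. by case: x. Qed.
Lemma ImN (x : C) : complex.Im (- x) = - complex.Im x.
Proof. by case: x. Qed.
Lemma ReM (x y : C) : complex.Re (x * y) = complex.Re x * complex.Re y - complex.Im x * complex.Im y.
Proof. by case: x; case: y. Qed.
Lemma ImM (x y : C) : complex.Im (x * y) = complex.Re x * complex.Im y + complex.Im x * complex.Re y.
Proof. by case: x => a b; case: y => c d /=; ring. Qed.
Lemma ReJ (x : C) : complex.Re (x^*) = complex.Re x.
Proof. by case: x. Qed.
Lemma ImJ (x : C) : complex.Im (x^*) = - complex.Im x.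
Proof. by case: x. Qed.
Lemma Re_sum (I : Type) (r : seq I) (P : pred I) (F : I -> C) :
  complex.Re (\sum_(i <- r | P i) F i) = \sum_(i <- r | P i) complex.Re (F i).
Proof. by apply: (big_morph _ ReD). Qed.
Lemma Im_sum (I : Type) (r : seq I) (P : pred I) (F : I -> C) :
  complex.Im (\sum_(i <- r | P i) F i) = \sum_(i <- r | P i) complex.Im (F i).
Proof. by apply: (big_morph _ ImD). Qed.

Variable n : nat.
Implicit Types (u v : 'cV[C]_n).

Definition nsq (v : 'cV[C]_n) : R :=
  \sum_i (complex.Re (v i 0) ^+ 2 + complex.Im (v i 0) ^+ 2).
Definition dotR (u v : 'cV[C]_n) : R :=
  \sum_i (complex.Re (u i 0) * complex.Re (v i 0) + complex.Im (u i 0) * complex.Im (v i 0)).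
Definition adjm m p (M : 'M[C]_(m, p)) : 'M[C]_(p, m) := map_mx (@Num.conj C) (M^T).

Lemma vnormE v : vnorm v = Num.sqrt (nsq v). Proof. by []. Qed.

Lemma nsq_ge0 v : 0 <= nsq v.
Proof. by apply: sumr_ge0 => i _; rewrite addr_ge0 // sqr_ge0. Qed.

Lemma vnorm_ge0 v : 0 <= vnorm v.
Proof. exact: sqrtr_ge0. Qed.

Lemma vnorm_sq v : vnorm v ^+ 2 = nsq v.
Proof. by rewrite vnormE sqr_sqrtr // nsq_ge0. Qed.

Lemma nsq_dotR v : nsq v = dotR v v.
Proof. by apply: eq_bigr => i _; rewrite !expr2. Qed.

Lemma dotR_CS u v : dotR u v <= vnorm u * vnorm v.
Proof. exact: realCS. Qed.

Lemma dotR_Re u v : dotR u v = complex.Re ((adjm u *m v) 0 0).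
Proof.
rewrite mxE Re_sum; apply: eq_bigr => i _.
by rewrite !mxE ReM ReJ ImJ; ring.
Qed.

Lemma adjmM m p q (A : 'M[C]_(m, p)) (B : 'M[C]_(p, q)) :
  adjm (A *m B) = adjm B *m adjm A.
Proof. by rewrite /adjm trmx_mul map_mxM. Qed.

Lemma nsq_unitary (U : 'M[C]_n) v : adjm U *m U = 1%:M -> nsq (U *m v) = nsq v.
Proof.
move=> UU; rewrite !nsq_dotR !dotR_Re adjmM.
by rewrite -mulmxA (mulmxA (adjm U)) UU mul1mx.
Qed.

Lemma vnorm_unitary (U : 'M[C]_n) v : adjm U *m U = 1%:M -> vnorm (U *m v) = vnorm v.
Proof. by move=> UU; rewrite !vnormE nsq_unitary. Qed.


Lemma sq_bound (x a : R) : x <= a -> - x <= a -> x ^+ 2 <= a ^+ 2.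
Proof. by move=> h1 h2; nra. Qed.

Lemma lin_bound (p q : 'I_n -> R) v : vnorm v <= 1 ->
  \sum_j (p j * complex.Re (v j 0) + q j * complex.Im (v j 0)) <=
  Num.sqrt (\sum_j (p j ^+ 2 + q j ^+ 2)).
Proof.
move=> v1; apply: (le_trans (realCS p q (fun j => complex.Re (v j 0)) (fun j => complex.Im (v j 0)))).
rewrite -[X in _ <= X]mulr1; apply: ler_wpM2l; first exact: sqrtr_ge0.
exact: v1.
Qed.

Lemma Re_mulmx (M : 'M[C]_n) v i : complex.Re ((M *m v) i 0) =
  \sum_j (complex.Re (M i j) * complex.Re (v j 0) + (- complex.Im (M i j)) * complex.Im (v j 0)).
Proof. by rewrite mxE Re_sum; apply: eq_bigr => j _; rewrite ReM; ring. Qed.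

Lemma Im_mulmx (M : 'M[C]_n) v i : complex.Im ((M *m v) i 0) =
  \sum_j (complex.Im (M i j) * complex.Re (v j 0) + complex.Re (M i j) * complex.Im (v j 0)).
Proof. by rewrite mxE Im_sum; apply: eq_bigr => j _; rewrite ImM; ring. Qed.

Lemma specnorm_bounded (M : 'M[C]_n) : exists B, forall v, vnorm v <= 1 -> vnorm (M *m v) <= B.
Proof.
pose rho i := \sum_j (complex.Re (M i j) ^+ 2 + complex.Im (M i j) ^+ 2).
have rho0 : forall i, 0 <= rho i by move=> i; apply: sumr_ge0 => j _; rewrite addr_ge0 // sqr_ge0.
exists (Num.sqrt (\sum_i (rho i + rho i))) => v v1.
rewrite vnormE; apply: ler_wsqrtr; apply: ler_sum => i _.
apply: lerD; rewrite -(sqr_sqrtr (rho0 i)); apply: sq_bound.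
- rewrite Re_mulmx; apply: (le_trans (lin_bound _ _ v1)).
  by apply: ler_wsqrtr; apply: ler_sum => j _; rewrite sqrrN.
- rewrite Re_mulmx -sumrN.
  have -> : \sum_j - (complex.Re (M i j) * complex.Re (v j 0) + - complex.Im (M i j) * complex.Im (v j 0)) =
     \sum_j ((- complex.Re (M i j)) * complex.Re (v j 0) + complex.Im (M i j) * complex.Im (v j 0)).
    by apply: eq_bigr => j _; ring.
  apply: (le_trans (lin_bound _ _ v1)).
  by apply: ler_wsqrtr; apply: ler_sum => j _; rewrite sqrrN.
- rewrite Im_mulmx; apply: (le_trans (lin_bound _ _ v1)).
  by apply: ler_wsqrtr; apply: ler_sum => j _; rewrite addrC.
- rewrite Im_mulmx -sumrN.
  have -> : \sum_j - (complex.Im (M i j) * complex.Re (v j 0) + complex.Re (M i j) * complex.Im (v j 0)) =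
     \sum_j ((- complex.Im (M i j)) * complex.Re (v j 0) + (- complex.Re (M i j)) * complex.Im (v j 0)).
    by apply: eq_bigr => j _; ring.
  apply: (le_trans (lin_bound _ _ v1)).
  by apply: ler_wsqrtr; apply: ler_sum => j _; rewrite !sqrrN addrC.
Qed.

Lemma vnorm0 : vnorm (0 : 'cV[C]_n) = 0.
Proof.
rewrite vnormE /nsq big1 ?sqrtr0 // => i _.
by rewrite mxE /= expr2 mulr0 addr0.
Qed.

Lemma specnorm_ub (M : 'M[C]_n) v : vnorm v <= 1 -> vnorm (M *m v) <= specnorm M.
Proof.
move=> v1; have [B HB] := specnorm_bounded M.
apply: sup_upper_bound; last by exists v.
split; first by exists (vnorm (M *m v)); exists v.
by exists B => y [w w1 <-]; exact: HB.
Qed.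

Lemma specnorm_le (M : 'M[C]_n) c :
  (forall v, vnorm v <= 1 -> vnorm (M *m v) <= c) -> specnorm M <= c.
Proof.
move=> H; apply: ge_sup.
  exists (vnorm (M *m 0)); exists 0 => //=; by rewrite vnorm0.
by move=> y [w w1 <-]; exact: H.
Qed.

Lemma specnorm_ge0 (M : 'M[C]_n) : 0 <= specnorm M.
Proof.
apply: (le_trans (vnorm_ge0 (M *m 0))); apply: specnorm_ub.
by rewrite vnorm0.
Qed.

Lemma specnorm_conj (M U V : 'M[C]_n) :
  adjm U *m U = 1%:M -> adjm V *m V = 1%:M ->
  specnorm (U *m M *m V) <= specnorm M.
Proof.
move=> UU VV; apply: specnorm_le => v v1.
rewrite -!mulmxA vnorm_unitary //; apply: specnorm_ub.
by rewrite vnorm_unitary.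
Qed.

End Vec.

Local Open Scope complex_scope.

Section Skew.
Variable R : realType.
Local Notation C := (complex R).
Local Notation mu := (@lebesgue_measure R).

Lemma RintegralN (D : set R) (f : R -> R) :
  \int[mu]_(x in D) (- f x) = - \int[mu]_(x in D) f x.
Proof.
rewrite /Rintegral.
rewrite integralE [X in _ = - fine X]integralE.
have -> : ((fun x => (- f x)%:E)^\+ = (fun x => (f x)%:E)^\-)%E.
  by rewrite -funeposN; congr (_^\+)%E; apply/funext => x; rewrite EFinN.
have -> : ((fun x => (- f x)%:E)^\- = (fun x => (f x)%:E)^\+)%E.
  by rewrite -funenegN; congr (_^\-)%E; apply/funext => x; rewrite EFinN.
have ge1 : (0 <= \int[mu]_(x in D) ((fun x => (f x)%:E)^\+ x))%E.
  by apply: integral_ge0 => x _; exact: funepos_ge0.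
have ge2 : (0 <= \int[mu]_(x in D) ((fun x => (f x)%:E)^\- x))%E.
  by apply: integral_ge0 => x _; exact: funeneg_ge0.
move: ge1 ge2.
case: (\int[mu]_(x in D) ((fun x => (f x)%:E)^\+ x))%E => [a||] //;
case: (\int[mu]_(x in D) ((fun x => (f x)%:E)^\- x))%E => [b||] //= _ _.
- by rewrite opprB.
- by rewrite oppr0.
- by rewrite oppr0.
- by rewrite oppr0.
Qed.

Lemma ointN (a b : R) (f : R -> R) : oint a b (fun s => - f s) = - oint a b f.
Proof. by rewrite /oint; case: ifP => _; rewrite RintegralN. Qed.

Variable n : nat.
Implicit Types (X Y M : 'M[C]_n).

Definition skewm M := adjm M = - M.

Lemma skewmP M : skewm M <-> forall i j, M j i = - (M i j)^*.
Proof.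
split => [/matrixP H i j | H].
  have := H i j; rewrite !mxE => E.
  by rewrite -[M j i]conjCK E rmorphN.
apply/matrixP => i j; rewrite !mxE H rmorphN /= conjCK.
by [].
Qed.

Lemma skewmB X Y : skewm X -> skewm Y -> skewm (X - Y).
Proof.
rewrite /skewm => HX HY; apply/matrixP => i j.
have hx := congr1 (fun M => M i j) HX; have hy := congr1 (fun M => M i j) HY.
rewrite !mxE in hx; rewrite !mxE in hy; rewrite !mxE rmorphB /= hx hy.
by rewrite opprB opprK addrC.
Qed.

Lemma skewmZ (c : C) X : Num.conj c = c -> skewm X -> skewm (c *: X).
Proof.
rewrite /skewm => Hc HX; apply/matrixP => i j.
have hx := congr1 (fun M => M i j) HX.
rewrite !mxE in hx; rewrite !mxE rmorphM /=. rewrite [Num.Num_conj__canonical__GRing_RMorphism _ c]Hc hx.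
by rewrite mulrN.
Qed.

Lemma skewm_comm X Y : skewm X -> skewm Y -> skewm (comm X Y).
Proof.
rewrite /skewm /comm => HX HY.
have -> : adjm (X *m Y - Y *m X) = adjm (X *m Y) - adjm (Y *m X).
  by apply/matrixP => i j; rewrite !mxE rmorphB.
by rewrite !adjmM HX HY !mulNmx !mulmxN !opprK opprB.
Qed.

Lemma skewm_mxint (a b : R) (F : R -> 'M[C]_n) :
  (forall s, skewm (F s)) -> skewm (mxint a b F).
Proof.
move=> HF; apply/skewmP => i j.
rewrite !mxE.
have -> : (fun s => complex.Re (F s j i)) = (fun s => - complex.Re (F s i j)).
  by apply/funext => s; move/skewmP: (HF s) => ->; rewrite ReN ReJ.
have -> : (fun s => complex.Im (F s j i)) = (fun s => complex.Im (F s i j)).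
  by apply/funext => s; move/skewmP: (HF s) => ->; rewrite ImN ImJ opprK.
rewrite ointN.
by apply/eqP; rewrite eq_complex /= opprK !eqxx.
Qed.

Lemma skewm_A (H : R -> 'M[C]_n) t : is_hermitian (H t) -> skewm (A H t).
Proof.
move=> Hh; apply/skewmP => i j.
rewrite /A !mxE Hh rmorphN rmorphM /=.
have cE : forall z : C, Num.conj z = conjc z by [].
rewrite !cE; case: (H t i j) => x y.
by apply/eqP; rewrite eq_complex /=; apply/andP; split; apply/eqP; ring.
Qed.

Lemma skewm_Omega2 (H : R -> 'M[C]_n) t :
  (forall s, is_hermitian (H s)) -> skewm (Omega2 H t).
Proof.
move=> Hh; rewrite /Omega2.
have sA : forall s, skewm (A H s) by move=> s; exact: skewm_A.
apply: skewmB; first exact: skewm_mxint.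
apply: skewmZ; first by rewrite fmorphV /= conjC_nat.
apply: skewm_mxint => s; apply: skewm_comm => //.
exact: skewm_mxint.
Qed.

End Skew.

Local Open Scope complex_scope.

Section Spec.
Variable R : realType.
Local Notation C := (complex R).

Lemma cvg_sumR (I : Type) (r : seq I) (u : I -> nat -> R) (l : I -> R) :
  (forall i, u i @ \oo --> l i) ->
  (fun N => \sum_(i <- r) u i N) @ \oo --> \sum_(i <- r) l i.
Proof.
move=> H; elim: r => [|i r IH].
  rewrite big_nil; under eq_fun do rewrite big_nil; exact: cvg_cst.
rewrite big_cons; under eq_fun do rewrite big_cons.
exact: cvgD.
Qed.

Variable n : nat.
Implicit Types (X Y Z M : 'M[C]_n).

Lemma adjm_tstar m p (M : 'M[C]_(m, p)) : adjm M = (M ^t*)%sesqui.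
Proof. by []. Qed.

Lemma adjmK m p (M : 'M[C]_(m, p)) : adjm (adjm M) = M.
Proof. by rewrite !adjm_tstar trmxCK. Qed.

Lemma adk_diag (d : 'rV[C]_n) k Z a b :
  adk (diag_mx d) k Z a b = (d 0 a - d 0 b) ^+ k * Z a b.
Proof.
elim: k a b => [|k IH] a b; first by rewrite expr0 mul1r.
rewrite /adk iterS -/(adk (diag_mx d) k Z) /comm.
rewrite mul_diag_mx mul_mx_diag !mxE !IH exprS; ring.
Qed.

Lemma adk_conj (Q P D Y : 'M[C]_n) k :
  P *m Q = 1%:M -> Q *m P = 1%:M ->
  adk (Q *m D *m P) k Y = Q *m adk D k (P *m Y *m Q) *m P.
Proof.
move=> PQ QP; elim: k => [|k IH].
  by rewrite /adk /= !mulmxA QP mul1mx -mulmxA QP mulmx1.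
rewrite /adk !iterS -!/(adk _ k _) IH /comm.
rewrite mulmxBr mulmxBl.
by congr (_ - _); rewrite -!mulmxA (mulmxA P Q) PQ mul1mx.
Qed.


Lemma Re_sum2 (F : 'I_n -> 'I_n -> C) :
  complex.Re (\sum_b \sum_a F b a) = \sum_b \sum_a complex.Re (F b a).
Proof. by rewrite Re_sum; apply: eq_bigr => b _; rewrite Re_sum. Qed.

Lemma Im_sum2 (F : 'I_n -> 'I_n -> C) :
  complex.Im (\sum_b \sum_a F b a) = \sum_b \sum_a complex.Im (F b a).
Proof. by rewrite Im_sum; apply: eq_bigr => b _; rewrite Im_sum. Qed.

Lemma exch3 (N : nat) (F : nat -> 'I_n -> 'I_n -> R) :
  \sum_(0 <= k < N) \sum_b \sum_a F k b a = \sum_b \sum_a \sum_(0 <= k < N) F k b a.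
Proof.
rewrite exchange_big /=; apply: eq_bigr => b _.
by rewrite exchange_big.
Qed.

Lemma lim_entry_Re (q : 'I_n -> 'I_n -> C) (mu : 'I_n -> 'I_n -> R) :
  limn (fun N => \sum_(0 <= k < N)
     complex.Re (\sum_b \sum_a q b a * ('i * (mu b a)%:C) ^+ k) / (k + 4)`!%:R)
  = \sum_b \sum_a complex.Re (q b a * Gc (mu b a)).
Proof.
apply: (cvg_lim (@Rhausdorff R)).
have -> : (fun N => \sum_(0 <= k < N)
     complex.Re (\sum_b \sum_a q b a * ('i * (mu b a)%:C) ^+ k) / (k + 4)`!%:R) =
   (fun N => \sum_b \sum_a \sum_(0 <= k < N)
     complex.Re (q b a * ('i * (mu b a)%:C) ^+ k) / (k + 4)`!%:R).
  apply/funext => N; rewrite -exch3; apply: eq_bigr => k _.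
  rewrite Re_sum2 mulr_suml; apply: eq_bigr => b _.
  by rewrite mulr_suml.
apply: cvg_sumR => b; apply: cvg_sumR => a.
exact: cvg_ReG.
Qed.

Lemma lim_entry_Im (q : 'I_n -> 'I_n -> C) (mu : 'I_n -> 'I_n -> R) :
  limn (fun N => \sum_(0 <= k < N)
     complex.Im (\sum_b \sum_a q b a * ('i * (mu b a)%:C) ^+ k) / (k + 4)`!%:R)
  = \sum_b \sum_a complex.Im (q b a * Gc (mu b a)).
Proof.
apply: (cvg_lim (@Rhausdorff R)).
have -> : (fun N => \sum_(0 <= k < N)
     complex.Im (\sum_b \sum_a q b a * ('i * (mu b a)%:C) ^+ k) / (k + 4)`!%:R) =
   (fun N => \sum_b \sum_a \sum_(0 <= k < N)
     complex.Im (q b a * ('i * (mu b a)%:C) ^+ k) / (k + 4)`!%:R).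
  apply/funext => N; rewrite -exch3; apply: eq_bigr => k _.
  rewrite Im_sum2 mulr_suml; apply: eq_bigr => b _.
  by rewrite mulr_suml.
apply: cvg_sumR => b; apply: cvg_sumR => a.
exact: cvg_ImG.
Qed.

Definition Gm (r : 'I_n -> R) Z : 'M[C]_n := \matrix_(a, b) (Gc (r a - r b) * Z a b).

Lemma g_ad_conj (Q P : 'M[C]_n) (r : 'I_n -> R) Y :
  P *m Q = 1%:M -> Q *m P = 1%:M ->
  g_ad (Q *m diag_mx (\row_a ('i * (r a)%:C)) *m P) Y = Q *m Gm r (P *m Y *m Q) *m P.
Proof.
move=> PQ QP; apply/matrixP => i j.
set Z := P *m Y *m Q.
pose q b a := Q i a * Z a b * P b j.
pose mu (b a : 'I_n) := r a - r b.
have ent : forall k, adk (Q *m diag_mx (\row_a ('i * (r a)%:C)) *m P) k Y i j =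
    \sum_b \sum_a q b a * ('i * (mu b a)%:C) ^+ k.
  move=> k; rewrite adk_conj // mxE; apply: eq_bigr => b _.
  rewrite mxE mulr_suml; apply: eq_bigr => a _.
  by rewrite adk_diag [(\row_a _) 0 a]mxE [(\row_a _) 0 b]mxE /q /mu rmorphB /= -/Z mulrBr [_ ^+ k * _]mulrC !mulrA -[Q i a * Z a b * _ * P b j]mulrA [_ ^+ k * P b j]mulrC mulrA.
rewrite /g_ad mxE.
set Om := Q *m diag_mx (\row_a ('i * (r a)%:C)) *m P.
have eR : (fun N => \sum_(0 <= k < N) (complex.Re (adk Om k Y i j) / ((k + 4)`!)%:R)) =
    (fun N => \sum_(0 <= k < N)
     complex.Re (\sum_b \sum_a q b a * ('i * (mu b a)%:C) ^+ k) / (k + 4)`!%:R).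
  by apply/funext => N; apply: eq_bigr => k _; rewrite ent.
have eI : (fun N => \sum_(0 <= k < N) (complex.Im (adk Om k Y i j) / ((k + 4)`!)%:R)) =
    (fun N => \sum_(0 <= k < N)
     complex.Im (\sum_b \sum_a q b a * ('i * (mu b a)%:C) ^+ k) / (k + 4)`!%:R).
  by apply/funext => N; apply: eq_bigr => k _; rewrite ent.
rewrite eR eI lim_entry_Re lim_entry_Im.
rewrite mxE.
have -> : \sum_b (Q *m Gm r Z) i b * P b j = \sum_b \sum_a q b a * Gc (mu b a).
  apply: eq_bigr => b _; rewrite mxE mulr_suml; apply: eq_bigr => a _.
  rewrite mxE /q /mu; ring.
by rewrite -Re_sum2 -Im_sum2; case: (\sum_b \sum_a q b a * Gc (mu b a)).
Qed.


Lemma skew_spectral Om : skewm Om -> exists (P : 'M[C]_n) (r : 'I_n -> R),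
  [/\ P *m adjm P = 1%:M, adjm P *m P = 1%:M &
      Om = adjm P *m diag_mx (\row_a ('i * (r a)%:C)) *m P].
Proof.
move=> sk.
have nOm : Om \is normalmx.
  by rewrite qualifE -adjm_tstar sk mulmxN mulNmx.
set P := spectralmx Om; set d := spectral_diag Om.
have PU : P \is unitarymx := spectral_unitarymx Om.
have PQ : P *m adjm P = 1%:M by apply/unitarymxP.
have QP : adjm P *m P = 1%:M.
  by rewrite adjm_tstar -invmx_unitary // mulVmx // spectral_unit.
have E : Om = adjm P *m diag_mx d *m P.
  by rewrite adjm_tstar -invmx_unitary //; exact/orthomx_spectralP.
have ED : diag_mx d = P *m Om *m adjm P.
  by rewrite E !mulmxA PQ mul1mx -mulmxA PQ mulmx1.
have aD : adjm (diag_mx d) = - diag_mx d.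
  by rewrite ED !adjmM adjmK sk mulNmx mulmxN mulmxA.
exists P, (fun a => complex.Im (d 0 a)); split => //.
suff -> : \row_a ('i * (complex.Im (d 0 a))%:C) = d by [].
apply/rowP => a; rewrite mxE.
have := congr1 (fun M => M a a) aD; rewrite /= !mxE eqxx /= !mulr1n.
have cE : forall z : C, Num.conj z = conjc z by [].
rewrite cE; case: (d 0 a) => x y /= /eqP; rewrite eq_complex /= => /andP [/eqP hx _].
have -> : x = 0 by lra.
by apply/eqP; rewrite eq_complex /=; apply/andP; split; apply/eqP; ring.
Qed.

End Spec.

Local Open Scope complex_scope.

Section Main.
Variable R : realType.
Local Notation C := (complex R).

Definition ex (t : R) : C := (cos t +i* sin t).

Lemma cE (z : C) : Num.conj z = conjc z. Proof. by []. Qed.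

Lemma ex_norm (z : C) t :
  complex.Re (z * ex t) ^+ 2 + complex.Im (z * ex t) ^+ 2 =
  complex.Re z ^+ 2 + complex.Im z ^+ 2.
Proof.
case: z => a b; rewrite /ex; simpc; rewrite /=.
transitivity ((a ^+ 2 + b ^+ 2) * (cos t ^+ 2 + sin t ^+ 2)); first by ring.
by rewrite cos2Dsin2 mulr1.
Qed.

Lemma ex_conj t t' : Num.conj (ex (- t)) * ex (- t') = ex (t - t').
Proof.
rewrite cE /ex /= cosN sinN cosN sinN cosB sinB.
by apply/eqP; rewrite eq_complex /=; apply/andP; split; apply/eqP; ring.
Qed.

Lemma Re_q_ex (q : C) t : complex.Re (q * ex t) = complex.Re q * cos t - complex.Im q * sin t.
Proof. by case: q => a b; rewrite /ex; simpc. Qed.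

Lemma Re_q_Gc (q : C) m : complex.Re (q * Gc m) =
  I01 (fun s => (1 - s) ^+ 3 * (complex.Re q * cos (s * m) - complex.Im q * sin (s * m))) / 6%:R.
Proof.
have c3 : continuous (fun s : R => (1 - s) ^+ 3).
  by apply: cX; apply: cB; [exact: cC|exact: cI].
have cc : continuous (fun s : R => (1 - s) ^+ 3 * cos (s * m)).
  by apply: cM => //; apply: cComp; exact: continuous_cos.
have cs : continuous (fun s : R => (1 - s) ^+ 3 * sin (s * m)).
  by apply: cM => //; apply: cComp; exact: continuous_sin.
have -> : complex.Re (q * Gc m) = complex.Re q * GR m - complex.Im q * GI m.
  by case: q => a b; rewrite /Gc; simpc.
have -> : (fun s => (1 - s) ^+ 3 * (complex.Re q * cos (s * m) - complex.Im q * sin (s * m))) =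
  (fun s => complex.Re q * ((1 - s) ^+ 3 * cos (s * m)) - complex.Im q * ((1 - s) ^+ 3 * sin (s * m))).
  by apply/funext => s; ring.
rewrite I01B; last 2 first.
- by apply: cM => //; exact: cC.
- by apply: cM => //; exact: cC.
by rewrite !I01Z // /GR /GI; ring.
Qed.

Lemma ReD7 (x y : C) : complex.Re (x + y) = complex.Re x + complex.Re y.
Proof. by case: x; case: y. Qed.
Lemma Re_sum7 (I : Type) (r : seq I) (P : pred I) (F : I -> C) :
  complex.Re (\sum_(i <- r | P i) F i) = \sum_(i <- r | P i) complex.Re (F i).
Proof. by apply: (big_morph _ ReD7). Qed.
Lemma ImD7 (x y : C) : complex.Im (x + y) = complex.Im x + complex.Im y.
Proof. by case: x; case: y. Qed.
Lemma Im_sum7 (I : Type) (r : seq I) (P : pred I) (F : I -> C) :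
  complex.Im (\sum_(i <- r | P i) F i) = \sum_(i <- r | P i) complex.Im (F i).
Proof. by apply: (big_morph _ ImD7). Qed.
Lemma ReConjM (x w : C) : complex.Re (Num.conj x * w) =
  complex.Re x * complex.Re w + complex.Im x * complex.Im w.
Proof. by rewrite cE; case: x => a b; case: w => c d; simpc; rewrite /=; ring. Qed.

Variable n : nat.

Lemma dotR_sum (x y : 'cV[C]_n) (M : 'M[C]_n) :
  dotR x (M *m y) = \sum_a \sum_b complex.Re (Num.conj (x a 0) * M a b * y b 0).
Proof.
rewrite /dotR; apply: eq_bigr => a _.
have -> : \sum_b complex.Re (Num.conj (x a 0) * M a b * y b 0) =
   complex.Re (Num.conj (x a 0) * (M *m y) a 0).
  rewrite mxE mulr_sumr Re_sum7; apply: eq_bigr => b _; by rewrite mulrA.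
by rewrite ReConjM.
Qed.


Lemma nsq_ex (x : 'cV[C]_n) (f : 'I_n -> R) :
  nsq (\col_a (x a 0 * ex (f a))) = nsq x.
Proof. by apply: eq_bigr => a _; rewrite !mxE ex_norm. Qed.

Lemma Gm_bound (r : 'I_n -> R) (Z : 'M[C]_n) (u : 'cV[C]_n) : vnorm u <= 1 ->
  vnorm (Gm r Z *m u) <= specnorm Z / 24%:R.
Proof.
move=> u1.
set x := Gm r Z *m u.
set K := vnorm x * specnorm Z.
pose q a b := Num.conj (x a 0) * Z a b * u b 0.
pose h a b := fun s : R => (1 - s) ^+ 3 * (complex.Re (q a b) * cos (s * (r a - r b))
                     - complex.Im (q a b) * sin (s * (r a - r b))).
have c3 : continuous (fun s : R => (1 - s) ^+ 3).
  by apply: cX; apply: cB; [exact: cC|exact: cI].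
have ch : forall a b, continuous (h a b).
  move=> a b; apply: cM => //; apply: cB; apply: cM; try exact: cC.
  - by apply: cComp; exact: continuous_cos.
  - by apply: cComp; exact: continuous_sin.
have E1 : nsq x = \sum_a \sum_b complex.Re (q a b * Gc (r a - r b)).
  rewrite nsq_dotR {2}/x dotR_sum; apply: eq_bigr => a _; apply: eq_bigr => b _.
  rewrite /q mxE; congr complex.Re.
  by rewrite /q [Gm r Z a b]mxE; ring.
have E2 : nsq x = (\sum_a \sum_b I01 (h a b)) / 6%:R.
  rewrite E1 mulr_suml; apply: eq_bigr => a _; rewrite mulr_suml.
  by apply: eq_bigr => b _; rewrite Re_q_Gc.
have E3 : nsq x = I01 (fun s => \sum_a \sum_b h a b s) / 6%:R.
  rewrite E2 I01_sum; last by move=> a; apply: cS.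
  by congr (_ / _); apply: eq_bigr => a _; rewrite I01_sum.
have bound : forall s, 0 <= s <= 1 -> \sum_a \sum_b h a b s <= K * (1 - s) ^+ 3.
  move=> s /andP [s0 s1].
  have -> : \sum_a \sum_b h a b s =
     (1 - s) ^+ 3 * \sum_a \sum_b complex.Re (q a b * ex (s * (r a - r b))).
    rewrite mulr_sumr; apply: eq_bigr => a _; rewrite mulr_sumr.
    by apply: eq_bigr => b _; rewrite Re_q_ex.
  rewrite mulrC; apply: ler_wpM2r; first by rewrite exprn_ge0 // subr_ge0.
  set y := \col_a (x a 0 * ex (- (s * r a))).
  set w := \col_b (u b 0 * ex (- (s * r b))).
  have -> : \sum_a \sum_b complex.Re (q a b * ex (s * (r a - r b))) = dotR y (Z *m w).
    rewrite dotR_sum; apply: eq_bigr => a _; apply: eq_bigr => b _.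
    rewrite [y a 0]mxE [w b 0]mxE /q rmorphM /= mulrBr -ex_conj.
    by congr complex.Re; ring.
  apply: (le_trans (dotR_CS y (Z *m w))).
  rewrite /K {1}vnormE /y nsq_ex -vnormE.
  apply: ler_wpM2l; first exact: vnorm_ge0.
  apply: specnorm_ub.
  by rewrite vnormE /w nsq_ex -vnormE.
have E4 : nsq x <= K / 24%:R.
  rewrite E3.
  apply: (@le_trans _ _ (I01 (fun s => K * (1 - s) ^+ 3) / 6%:R)).
    apply: ler_wpM2r; first by rewrite invr_ge0.
    apply: I01_le => //; first by apply: cS => a; apply: cS.
    by apply: cM => //; exact: cC.
  rewrite I01Z // I01_onem3.
  by rewrite le_eqVlt; apply/orP; left; apply/eqP; field.
have vx0 := vnorm_ge0 x.
have sZ := specnorm_ge0 Z.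
rewrite -vnorm_sq /K in E4.
have [->|vxp] := eqVneq (vnorm x) 0.
  by rewrite divr_ge0.
have vxpos : 0 < vnorm x by rewrite lt_def vxp vx0.
nra.
Qed.


Lemma main_bound (Om Y : 'M[C]_n) : skewm Om -> specnorm (g_ad Om Y) <= specnorm Y / 24%:R.
Proof.
move=> sk; have [P [r [PQ QP E]]] := skew_spectral sk.
have QQ : adjm (adjm P) *m adjm P = 1%:M by rewrite adjmK.
rewrite E g_ad_conj //.
apply: (le_trans (specnorm_conj _ QQ QP)).
apply: (@le_trans _ _ (specnorm (P *m Y *m adjm P) / 24%:R)).
  by apply: specnorm_le => v v1; exact: Gm_bound.
apply: ler_wpM2r; first by rewrite invr_ge0.
exact: specnorm_conj.
Qed.

End Main.

Unset Implicit Arguments.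
Local Close Scope complex_scope.

 
Theorem lemma7 (R : realType) : exists K : R,
  forall (n : nat) (H : R -> 'M[complex R]_n),
    mx_continuous H -> (forall t, is_hermitian (H t)) ->
    forall (t : R),
      specnorm (g_ad (Omega2 H t) (adk (Omega2 H t) 3 (dOmega2 H t)))
      <= K * specnorm (adk (Omega2 H t) 3 (dOmega2 H t)).
Proof.
exists (24%:R^-1) => n H _ Hh t.
rewrite mulrC; apply: main_bound.
exact: skewm_Omega2.
Qed.
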